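(* Let $\mathfrak n$ be a seven-dimensional nilpotent but non-abelian real Lie algebra with an invariant scalar product $\langle\cdot,\cdot\rangle$ of index three. Then $\mathrm{ad}(\mathfrak n)$ is not contained in $\mathfrak g_{2(2)}$, where $\mathfrak g_{2(2)}$ is regarded as a subalgebra of $\mathfrak{so}(\mathfrak n,\langle\cdot,\cdot\rangle)\cong\mathfrak{so}_{4,3}$ (i.e. there is no three-form on $\mathfrak n$ of $\mathrm G_{2(2)}$-type compatible with $\langle\cdot,\cdot\rangle$ that is annihilated by $\mathrm{ad}(x)$ for all $x\in\mathfrak n$).
   Context: An invariant scalar product is a nondegenerate symmetric bilinear form satisfying $\langle[x,y],z\rangle=\langle x,[y,z]\rangle$; index three on a seven-dimensional space means signature $(4,3)$ or $(3,4)$. $\mathfrak{so}(\mathfrak n,\langle\cdot,\cdot\rangle)$ is the Lie algebra of endomorphisms skew-symmetric for $\langle\cdot,\cdot\rangle$. $\mathfrak g_{2(2)}$ is the Lie algebra of the split real form $\mathrm G_{2(2)}$ of $\mathrm G_2^{\mathbb C}$, which is the stabilizer subalgebra in $\mathfrak{so}_{4,3}$ of a certain (generic, split-type) three-form. *)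

(* Defs.v *)
From HB Require Import structures.
From mathcomp Require Import all_boot all_order all_algebra.
From mathcomp Require Import reals.
Set Implicit Arguments. Unset Strict Implicit. Unset Printing Implicit Defensive.
Import Order.TTheory GRing.Theory Num.Theory.
Local Open Scope ring_scope.

Definition is_lie_bracket (R : realType) (V : vectType R) (br : V -> V -> V) : Prop :=
  (forall (a : R) x y z, br (a *: x + y) z = a *: br x z + br y z) /\
  (forall (a : R) x y z, br z (a *: x + y) = a *: br z x + br z y) /\
  (forall x, br x x = 0) /\
  (forall x y z, br x (br y z) + br y (br z x) + br z (br x y) = 0).

(* Nilpotent: the lower central series vanishes, i.e. for some n all
   n+1-fold nested brackets [x_1,[x_2,...[x_n,x]...]] vanish. *)
Definition lie_nilpotent (R : realType) (V : vectType R) (br : V -> V -> V) : Prop :=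
  exists n : nat, forall (xs : n.-tuple V) (x : V), foldr br x xs = 0.

Definition lie_nonabelian (R : realType) (V : vectType R) (br : V -> V -> V) : Prop :=
  exists x y, br x y != 0.

Definition is_invariant_scalar_product (R : realType) (V : vectType R)
  (br : V -> V -> V) (sp : V -> V -> R) : Prop :=
  (forall (a : R) x y z, sp (a *: x + y) z = a * sp x z + sp y z) /\
  (forall x y, sp x y = sp y x) /\
  (forall x, (forall y, sp x y = 0) -> x = 0) /\
  (forall x y z, sp (br x y) z = sp x (br y z)).

(* Index three on a 7-dimensional space: signature (4,3) or (3,4), i.e. there
   is an orthonormal basis with exactly 3 (or exactly 4) vectors of norm -1. *)
Definition has_index_three (R : realType) (V : vectType R) (sp : V -> V -> R) : Prop :=
  exists e : 7.-tuple V,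
    basis_of fullv e /\
    (forall i j : 'I_7, i != j -> sp (tnth e i) (tnth e j) = 0) /\
    (forall i : 'I_7, sp (tnth e i) (tnth e i) = 1 \/ sp (tnth e i) (tnth e i) = -1) /\
    (#|[set i : 'I_7 | sp (tnth e i) (tnth e i) == -1]| = 3%N \/
     #|[set i : 'I_7 | sp (tnth e i) (tnth e i) == -1]| = 4%N).

Definition trilinear (R : realType) (V : vectType R) (phi : V -> V -> V -> R) : Prop :=
  (forall (a : R) x y u v, phi (a *: x + y) u v = a * phi x u v + phi y u v) /\
  (forall (a : R) x y u v, phi u (a *: x + y) v = a * phi u x v + phi u y v) /\
  (forall (a : R) x y u v, phi u v (a *: x + y) = a * phi u v x + phi u v y).

Definition eps3 (R : realType) (a b c i j k : nat) : R :=
  ((((i == a) && (j == b) && (k == c)) : nat) + (((i == b) && (j == c) && (k == a)) : nat)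
     + (((i == c) && (j == a) && (k == b)) : nat))%:R
  - ((((i == b) && (j == a) && (k == c)) : nat) + (((i == a) && (j == c) && (k == b)) : nat)
     + (((i == c) && (j == b) && (k == a)) : nat))%:R.

(* Standard split (G_2(2)-type) three-form on R^7 (0-indexed basis):
   phi0 = e012 - e034 - e056 - e135 + e146 + e236 + e245
   (obtained from Bryant's compact form by e_k -> i e_k, k = 3..6). *)
Definition phi0 (R : realType) (i j k : 'I_7) : R :=
  eps3 R 0 1 2 i j k - eps3 R 0 3 4 i j k - eps3 R 0 5 6 i j k
  - eps3 R 1 3 5 i j k + eps3 R 1 4 6 i j k + eps3 R 2 3 6 i j k + eps3 R 2 4 5 i j k.

(* The metric induced by phi0: diag(1,1,1,-1,-1,-1,-1). *)
Definition g0 (R : realType) (i j : 'I_7) : R :=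
  if i == j then (if (i < 3)%N then 1 else -1) else 0.

(* phi is a three-form of G_2(2)-type compatible with sp: in some basis phi is
   the standard split form phi0 and sp is a nonzero multiple of the metric
   g0 induced by phi0 (so the stabilizer g_2(2) of phi lies in so(V,sp)). *)
Definition g22_compatible (R : realType) (V : vectType R)
  (sp : V -> V -> R) (phi : V -> V -> V -> R) : Prop :=
  exists (f : 7.-tuple V) (c : R),
    basis_of fullv f /\ c != 0 /\
    (forall i j k : 'I_7, phi (tnth f i) (tnth f j) (tnth f k) = phi0 R i j k) /\
    (forall i j : 'I_7, sp (tnth f i) (tnth f j) = c * g0 R i j).

Definition ad_annihilates (R : realType) (V : vectType R)
  (br : V -> V -> V) (phi : V -> V -> V -> R) : Prop :=
  forall x a b c, phi (br x a) b c + phi a (br x b) c + phi a b (br x c) = 0.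

(* Main.v *)
Require Import Defs.
From HB Require Import structures.
From mathcomp Require Import all_boot all_order all_algebra.
From mathcomp Require Import reals ring lra zify.
From Stdlib Require Import FunctionalExtensionality.
Import Order.TTheory GRing.Theory Num.Theory.
Set Implicit Arguments. Unset Strict Implicit. Unset Printing Implicit Defensive.
Local Open Scope ring_scope.

Definition sum7 (R : realType) (G : nat -> R) : R :=
  G 0%N + G 1%N + G 2%N + G 3%N + G 4%N + G 5%N + G 6%N.

Definition phn (R : realType) (i j k : nat) : R :=
  eps3 R 0 1 2 i j k - eps3 R 0 3 4 i j k - eps3 R 0 5 6 i j k
  - eps3 R 1 3 5 i j k + eps3 R 1 4 6 i j k + eps3 R 2 3 6 i j k + eps3 R 2 4 5 i j k.

Definition gn (R : realType) (i : nat) : R := if (i < 3)%N then 1 else -1.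

Definition DD (R : realType) (Q : nat -> nat -> nat -> R) (i j k l : nat) : R :=
  sum7 (fun m => gn R m * (Q i j m * phn R m k l + Q i k m * phn R j m l + Q i l m * phn R j k m)).

Definition alt (R : realType) (Q : nat -> nat -> nat -> R) (i j k : nat) : R :=
  if (i < j)%N && (j < k)%N then Q i j k
  else if (j < k)%N && (k < i)%N then Q j k i
  else if (k < i)%N && (i < j)%N then Q k i j
  else if (j < i)%N && (i < k)%N then - Q j i k
  else if (i < k)%N && (k < j)%N then - Q i k j
  else if (k < j)%N && (j < i)%N then - Q k j i
  else 0.

Lemma pure_sorted (R : realType) (Q : nat -> nat -> nat -> R)
  (H : forall i j k l, (i < 7)%N -> (j < 7)%N -> (k < 7)%N -> (l < 7)%N -> DD (alt Q) i j k l = 0) :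
  Q 0 1 2 = 0 /\ Q 0 1 3 = 0 /\ Q 0 1 4 = 0 /\ Q 0 1 5 = 0 /\ Q 0 1 6 = 0 /\ Q 0 2 3 = 0 /\ Q 0 2 4 = 0 /\ Q 0 2 5 = 0 /\ Q 0 2 6 = 0 /\ Q 0 3 4 = 0 /\ Q 0 3 5 = 0 /\ Q 0 3 6 = 0 /\ Q 0 4 5 = 0 /\ Q 0 4 6 = 0 /\ Q 0 5 6 = 0 /\ Q 1 2 3 = 0 /\ Q 1 2 4 = 0 /\ Q 1 2 5 = 0 /\ Q 1 2 6 = 0 /\ Q 1 3 4 = 0 /\ Q 1 3 5 = 0 /\ Q 1 3 6 = 0 /\ Q 1 4 5 = 0 /\ Q 1 4 6 = 0 /\ Q 1 5 6 = 0 /\ Q 2 3 4 = 0 /\ Q 2 3 5 = 0 /\ Q 2 3 6 = 0 /\ Q 2 4 5 = 0 /\ Q 2 4 6 = 0 /\ Q 2 5 6 = 0 /\ Q 3 4 5 = 0 /\ Q 3 4 6 = 0 /\ Q 3 5 6 = 0 /\ Q 4 5 6 = 0.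
Proof.
have e0 : - Q 0 1 4 - Q 0 2 3 = 0.
  by rewrite -(H 0 0 1 3 isT isT isT isT) /DD /sum7 /alt /gn /phn /eps3 /=; ring.
have e1 : Q 0 1 3 - Q 0 2 4 = 0.
  by rewrite -(H 0 0 1 4 isT isT isT isT) /DD /sum7 /alt /gn /phn /eps3 /=; ring.
have e2 : - Q 0 1 6 - Q 0 2 5 = 0.
  by rewrite -(H 0 0 1 5 isT isT isT isT) /DD /sum7 /alt /gn /phn /eps3 /=; ring.
have e3 : Q 0 1 5 - Q 0 2 6 = 0.
  by rewrite -(H 0 0 1 6 isT isT isT isT) /DD /sum7 /alt /gn /phn /eps3 /=; ring.
have e4 : - Q 0 3 6 - Q 0 4 5 = 0.
  by rewrite -(H 0 0 3 5 isT isT isT isT) /DD /sum7 /alt /gn /phn /eps3 /=; ring.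
have e5 : Q 0 3 5 - Q 0 4 6 = 0.
  by rewrite -(H 0 0 3 6 isT isT isT isT) /DD /sum7 /alt /gn /phn /eps3 /=; ring.
have e6 : Q 0 1 2 - Q 0 3 4 - Q 0 5 6 = 0.
  by rewrite -(H 0 1 3 6 isT isT isT isT) /DD /sum7 /alt /gn /phn /eps3 /=; ring.
have e7 : - Q 0 1 5 - Q 1 2 3 = 0.
  by rewrite -(H 1 0 1 3 isT isT isT isT) /DD /sum7 /alt /gn /phn /eps3 /=; ring.
have e8 : Q 0 1 6 - Q 1 2 4 = 0.
  by rewrite -(H 1 0 1 4 isT isT isT isT) /DD /sum7 /alt /gn /phn /eps3 /=; ring.
have e9 : Q 0 1 3 - Q 1 2 5 = 0.
  by rewrite -(H 1 0 1 5 isT isT isT isT) /DD /sum7 /alt /gn /phn /eps3 /=; ring.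
have e10 : - Q 0 1 4 - Q 1 2 6 = 0.
  by rewrite -(H 1 0 1 6 isT isT isT isT) /DD /sum7 /alt /gn /phn /eps3 /=; ring.
have e11 : - Q 1 3 6 - Q 1 4 5 = 0.
  by rewrite -(H 1 0 3 5 isT isT isT isT) /DD /sum7 /alt /gn /phn /eps3 /=; ring.
have e12 : - Q 0 1 2 + Q 1 3 5 - Q 1 4 6 = 0.
  by rewrite -(H 1 0 3 6 isT isT isT isT) /DD /sum7 /alt /gn /phn /eps3 /=; ring.
have e13 : - Q 1 3 4 - Q 1 5 6 = 0.
  by rewrite -(H 1 1 3 6 isT isT isT isT) /DD /sum7 /alt /gn /phn /eps3 /=; ring.
have e14 : - Q 0 2 5 + Q 1 2 4 = 0.
  by rewrite -(H 2 0 1 3 isT isT isT isT) /DD /sum7 /alt /gn /phn /eps3 /=; ring.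
have e15 : Q 0 2 6 - Q 1 2 3 = 0.
  by rewrite -(H 2 0 1 4 isT isT isT isT) /DD /sum7 /alt /gn /phn /eps3 /=; ring.
have e16 : Q 0 2 3 + Q 1 2 6 = 0.
  by rewrite -(H 2 0 1 5 isT isT isT isT) /DD /sum7 /alt /gn /phn /eps3 /=; ring.
have e17 : - Q 0 2 4 - Q 1 2 5 = 0.
  by rewrite -(H 2 0 1 6 isT isT isT isT) /DD /sum7 /alt /gn /phn /eps3 /=; ring.
have e18 : - Q 0 1 2 - Q 2 3 6 - Q 2 4 5 = 0.
  by rewrite -(H 2 0 3 5 isT isT isT isT) /DD /sum7 /alt /gn /phn /eps3 /=; ring.
have e19 : Q 2 3 5 - Q 2 4 6 = 0.
  by rewrite -(H 2 0 3 6 isT isT isT isT) /DD /sum7 /alt /gn /phn /eps3 /=; ring.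
have e20 : - Q 2 3 4 - Q 2 5 6 = 0.
  by rewrite -(H 2 1 3 6 isT isT isT isT) /DD /sum7 /alt /gn /phn /eps3 /=; ring.
have e21 : - Q 0 3 5 + Q 1 3 4 = 0.
  by rewrite -(H 3 0 1 3 isT isT isT isT) /DD /sum7 /alt /gn /phn /eps3 /=; ring.
have e22 : Q 0 3 6 + Q 2 3 4 = 0.
  by rewrite -(H 3 0 1 4 isT isT isT isT) /DD /sum7 /alt /gn /phn /eps3 /=; ring.
have e23 : Q 1 3 6 + Q 2 3 5 = 0.
  by rewrite -(H 3 0 1 5 isT isT isT isT) /DD /sum7 /alt /gn /phn /eps3 /=; ring.
have e24 : - Q 0 3 4 - Q 1 3 5 + Q 2 3 6 = 0.
  by rewrite -(H 3 0 1 6 isT isT isT isT) /DD /sum7 /alt /gn /phn /eps3 /=; ring.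
have e25 : - Q 0 1 3 - Q 3 4 5 = 0.
  by rewrite -(H 3 0 3 5 isT isT isT isT) /DD /sum7 /alt /gn /phn /eps3 /=; ring.
have e26 : Q 0 2 3 - Q 3 4 6 = 0.
  by rewrite -(H 3 0 3 6 isT isT isT isT) /DD /sum7 /alt /gn /phn /eps3 /=; ring.
have e27 : Q 1 2 3 - Q 3 5 6 = 0.
  by rewrite -(H 3 1 3 6 isT isT isT isT) /DD /sum7 /alt /gn /phn /eps3 /=; ring.
have e28 : - Q 0 4 5 - Q 2 3 4 = 0.
  by rewrite -(H 4 0 1 3 isT isT isT isT) /DD /sum7 /alt /gn /phn /eps3 /=; ring.
have e29 : Q 0 4 6 + Q 1 3 4 = 0.
  by rewrite -(H 4 0 1 4 isT isT isT isT) /DD /sum7 /alt /gn /phn /eps3 /=; ring.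
have e30 : - Q 0 3 4 + Q 1 4 6 + Q 2 4 5 = 0.
  by rewrite -(H 4 0 1 5 isT isT isT isT) /DD /sum7 /alt /gn /phn /eps3 /=; ring.
have e31 : Q 1 2 4 - Q 4 5 6 = 0.
  by rewrite -(H 4 1 3 6 isT isT isT isT) /DD /sum7 /alt /gn /phn /eps3 /=; ring.
have e32 : - Q 1 4 5 - Q 2 3 5 = 0.
  by rewrite -(H 5 0 1 3 isT isT isT isT) /DD /sum7 /alt /gn /phn /eps3 /=; ring.
have e33 : Q 0 5 6 + Q 1 3 5 - Q 2 4 5 = 0.
  by rewrite -(H 5 0 1 4 isT isT isT isT) /DD /sum7 /alt /gn /phn /eps3 /=; ring.
have e34 : Q 0 5 6 - Q 1 4 6 - Q 2 3 6 = 0.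
  by rewrite -(H 6 0 1 3 isT isT isT isT) /DD /sum7 /alt /gn /phn /eps3 /=; ring.
have z0 : Q 0 1 2 = 0.
  have h : (6%:R : R) * Q 0 1 2 = 2%:R * (Q 0 1 2 - Q 0 3 4 - Q 0 5 6) + - (2%:R * (- Q 0 1 2 + Q 1 3 5 - Q 1 4 6)) + - (2%:R * (- Q 0 1 2 - Q 2 3 6 - Q 2 4 5)) + - (1%:R * (- Q 0 3 4 - Q 1 3 5 + Q 2 3 6)) + - (1%:R * (- Q 0 3 4 + Q 1 4 6 + Q 2 4 5)) + 1%:R * (Q 0 5 6 + Q 1 3 5 - Q 2 4 5) + 1%:R * (Q 0 5 6 - Q 1 4 6 - Q 2 3 6) by ring.
  rewrite e6 e12 e18 e24 e30 e33 e34 !mulr0 ?oppr0 ?addr0 in h.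
  by move/eqP: h; rewrite mulf_eq0 pnatr_eq0 orFb => /eqP.
have z1 : Q 0 1 3 = 0.
  have h : (2%:R : R) * Q 0 1 3 = 1%:R * (Q 0 1 3 - Q 0 2 4) + 1%:R * (Q 0 1 3 - Q 1 2 5) + - (1%:R * (- Q 0 2 4 - Q 1 2 5)) by ring.
  rewrite e1 e9 e17 !mulr0 ?oppr0 ?addr0 in h.
  by move/eqP: h; rewrite mulf_eq0 pnatr_eq0 orFb => /eqP.
have z2 : Q 0 1 4 = 0.
  have h : (2%:R : R) * Q 0 1 4 = - (1%:R * (- Q 0 1 4 - Q 0 2 3)) + - (1%:R * (- Q 0 1 4 - Q 1 2 6)) + - (1%:R * (Q 0 2 3 + Q 1 2 6)) by ring.
  rewrite e0 e10 e16 !mulr0 ?oppr0 ?addr0 in h.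
  by move/eqP: h; rewrite mulf_eq0 pnatr_eq0 orFb => /eqP.
have z3 : Q 0 1 5 = 0.
  have h : (2%:R : R) * Q 0 1 5 = 1%:R * (Q 0 1 5 - Q 0 2 6) + - (1%:R * (- Q 0 1 5 - Q 1 2 3)) + 1%:R * (Q 0 2 6 - Q 1 2 3) by ring.
  rewrite e3 e7 e15 !mulr0 ?oppr0 ?addr0 in h.
  by move/eqP: h; rewrite mulf_eq0 pnatr_eq0 orFb => /eqP.
have z4 : Q 0 1 6 = 0.
  have h : (2%:R : R) * Q 0 1 6 = - (1%:R * (- Q 0 1 6 - Q 0 2 5)) + 1%:R * (Q 0 1 6 - Q 1 2 4) + 1%:R * (- Q 0 2 5 + Q 1 2 4) by ring.
  rewrite e2 e8 e14 !mulr0 ?oppr0 ?addr0 in h.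
  by move/eqP: h; rewrite mulf_eq0 pnatr_eq0 orFb => /eqP.
have z5 : Q 0 2 3 = 0.
  have h : (2%:R : R) * Q 0 2 3 = - (1%:R * (- Q 0 1 4 - Q 0 2 3)) + 1%:R * (- Q 0 1 4 - Q 1 2 6) + 1%:R * (Q 0 2 3 + Q 1 2 6) by ring.
  rewrite e0 e10 e16 !mulr0 ?oppr0 ?addr0 in h.
  by move/eqP: h; rewrite mulf_eq0 pnatr_eq0 orFb => /eqP.
have z6 : Q 0 2 4 = 0.
  have h : (2%:R : R) * Q 0 2 4 = - (1%:R * (Q 0 1 3 - Q 0 2 4)) + 1%:R * (Q 0 1 3 - Q 1 2 5) + - (1%:R * (- Q 0 2 4 - Q 1 2 5)) by ring.
  rewrite e1 e9 e17 !mulr0 ?oppr0 ?addr0 in h.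
  by move/eqP: h; rewrite mulf_eq0 pnatr_eq0 orFb => /eqP.
have z7 : Q 0 2 5 = 0.
  have h : (2%:R : R) * Q 0 2 5 = - (1%:R * (- Q 0 1 6 - Q 0 2 5)) + - (1%:R * (Q 0 1 6 - Q 1 2 4)) + - (1%:R * (- Q 0 2 5 + Q 1 2 4)) by ring.
  rewrite e2 e8 e14 !mulr0 ?oppr0 ?addr0 in h.
  by move/eqP: h; rewrite mulf_eq0 pnatr_eq0 orFb => /eqP.
have z8 : Q 0 2 6 = 0.
  have h : (2%:R : R) * Q 0 2 6 = - (1%:R * (Q 0 1 5 - Q 0 2 6)) + - (1%:R * (- Q 0 1 5 - Q 1 2 3)) + 1%:R * (Q 0 2 6 - Q 1 2 3) by ring.
  rewrite e3 e7 e15 !mulr0 ?oppr0 ?addr0 in h.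
  by move/eqP: h; rewrite mulf_eq0 pnatr_eq0 orFb => /eqP.
have z9 : Q 0 3 4 = 0.
  have h : (6%:R : R) * Q 0 3 4 = - (2%:R * (Q 0 1 2 - Q 0 3 4 - Q 0 5 6)) + - (1%:R * (- Q 0 1 2 + Q 1 3 5 - Q 1 4 6)) + - (1%:R * (- Q 0 1 2 - Q 2 3 6 - Q 2 4 5)) + - (2%:R * (- Q 0 3 4 - Q 1 3 5 + Q 2 3 6)) + - (2%:R * (- Q 0 3 4 + Q 1 4 6 + Q 2 4 5)) + - (1%:R * (Q 0 5 6 + Q 1 3 5 - Q 2 4 5)) + - (1%:R * (Q 0 5 6 - Q 1 4 6 - Q 2 3 6)) by ring.
  rewrite e6 e12 e18 e24 e30 e33 e34 !mulr0 ?oppr0 ?addr0 in h.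
  by move/eqP: h; rewrite mulf_eq0 pnatr_eq0 orFb => /eqP.
have z10 : Q 0 3 5 = 0.
  have h : (2%:R : R) * Q 0 3 5 = 1%:R * (Q 0 3 5 - Q 0 4 6) + - (1%:R * (- Q 0 3 5 + Q 1 3 4)) + 1%:R * (Q 0 4 6 + Q 1 3 4) by ring.
  rewrite e5 e21 e29 !mulr0 ?oppr0 ?addr0 in h.
  by move/eqP: h; rewrite mulf_eq0 pnatr_eq0 orFb => /eqP.
have z11 : Q 0 3 6 = 0.
  have h : (2%:R : R) * Q 0 3 6 = - (1%:R * (- Q 0 3 6 - Q 0 4 5)) + 1%:R * (Q 0 3 6 + Q 2 3 4) + 1%:R * (- Q 0 4 5 - Q 2 3 4) by ring.
  rewrite e4 e22 e28 !mulr0 ?oppr0 ?addr0 in h.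
  by move/eqP: h; rewrite mulf_eq0 pnatr_eq0 orFb => /eqP.
have z12 : Q 0 4 5 = 0.
  have h : (2%:R : R) * Q 0 4 5 = - (1%:R * (- Q 0 3 6 - Q 0 4 5)) + - (1%:R * (Q 0 3 6 + Q 2 3 4)) + - (1%:R * (- Q 0 4 5 - Q 2 3 4)) by ring.
  rewrite e4 e22 e28 !mulr0 ?oppr0 ?addr0 in h.
  by move/eqP: h; rewrite mulf_eq0 pnatr_eq0 orFb => /eqP.
have z13 : Q 0 4 6 = 0.
  have h : (2%:R : R) * Q 0 4 6 = - (1%:R * (Q 0 3 5 - Q 0 4 6)) + - (1%:R * (- Q 0 3 5 + Q 1 3 4)) + 1%:R * (Q 0 4 6 + Q 1 3 4) by ring.
  rewrite e5 e21 e29 !mulr0 ?oppr0 ?addr0 in h.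
  by move/eqP: h; rewrite mulf_eq0 pnatr_eq0 orFb => /eqP.
have z14 : Q 0 5 6 = 0.
  have h : (6%:R : R) * Q 0 5 6 = - (2%:R * (Q 0 1 2 - Q 0 3 4 - Q 0 5 6)) + - (1%:R * (- Q 0 1 2 + Q 1 3 5 - Q 1 4 6)) + - (1%:R * (- Q 0 1 2 - Q 2 3 6 - Q 2 4 5)) + 1%:R * (- Q 0 3 4 - Q 1 3 5 + Q 2 3 6) + 1%:R * (- Q 0 3 4 + Q 1 4 6 + Q 2 4 5) + 2%:R * (Q 0 5 6 + Q 1 3 5 - Q 2 4 5) + 2%:R * (Q 0 5 6 - Q 1 4 6 - Q 2 3 6) by ring.
  rewrite e6 e12 e18 e24 e30 e33 e34 !mulr0 ?oppr0 ?addr0 in h.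
  by move/eqP: h; rewrite mulf_eq0 pnatr_eq0 orFb => /eqP.
have z15 : Q 1 2 3 = 0.
  have h : (2%:R : R) * Q 1 2 3 = - (1%:R * (Q 0 1 5 - Q 0 2 6)) + - (1%:R * (- Q 0 1 5 - Q 1 2 3)) + - (1%:R * (Q 0 2 6 - Q 1 2 3)) by ring.
  rewrite e3 e7 e15 !mulr0 ?oppr0 ?addr0 in h.
  by move/eqP: h; rewrite mulf_eq0 pnatr_eq0 orFb => /eqP.
have z16 : Q 1 2 4 = 0.
  have h : (2%:R : R) * Q 1 2 4 = - (1%:R * (- Q 0 1 6 - Q 0 2 5)) + - (1%:R * (Q 0 1 6 - Q 1 2 4)) + 1%:R * (- Q 0 2 5 + Q 1 2 4) by ring.
  rewrite e2 e8 e14 !mulr0 ?oppr0 ?addr0 in h.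
  by move/eqP: h; rewrite mulf_eq0 pnatr_eq0 orFb => /eqP.
have z17 : Q 1 2 5 = 0.
  have h : (2%:R : R) * Q 1 2 5 = 1%:R * (Q 0 1 3 - Q 0 2 4) + - (1%:R * (Q 0 1 3 - Q 1 2 5)) + - (1%:R * (- Q 0 2 4 - Q 1 2 5)) by ring.
  rewrite e1 e9 e17 !mulr0 ?oppr0 ?addr0 in h.
  by move/eqP: h; rewrite mulf_eq0 pnatr_eq0 orFb => /eqP.
have z18 : Q 1 2 6 = 0.
  have h : (2%:R : R) * Q 1 2 6 = 1%:R * (- Q 0 1 4 - Q 0 2 3) + - (1%:R * (- Q 0 1 4 - Q 1 2 6)) + 1%:R * (Q 0 2 3 + Q 1 2 6) by ring.
  rewrite e0 e10 e16 !mulr0 ?oppr0 ?addr0 in h.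
  by move/eqP: h; rewrite mulf_eq0 pnatr_eq0 orFb => /eqP.
have z19 : Q 1 3 4 = 0.
  have h : (2%:R : R) * Q 1 3 4 = 1%:R * (Q 0 3 5 - Q 0 4 6) + 1%:R * (- Q 0 3 5 + Q 1 3 4) + 1%:R * (Q 0 4 6 + Q 1 3 4) by ring.
  rewrite e5 e21 e29 !mulr0 ?oppr0 ?addr0 in h.
  by move/eqP: h; rewrite mulf_eq0 pnatr_eq0 orFb => /eqP.
have z20 : Q 1 3 5 = 0.
  have h : (6%:R : R) * Q 1 3 5 = 1%:R * (Q 0 1 2 - Q 0 3 4 - Q 0 5 6) + 2%:R * (- Q 0 1 2 + Q 1 3 5 - Q 1 4 6) + - (1%:R * (- Q 0 1 2 - Q 2 3 6 - Q 2 4 5)) + - (2%:R * (- Q 0 3 4 - Q 1 3 5 + Q 2 3 6)) + 1%:R * (- Q 0 3 4 + Q 1 4 6 + Q 2 4 5) + 2%:R * (Q 0 5 6 + Q 1 3 5 - Q 2 4 5) + - (1%:R * (Q 0 5 6 - Q 1 4 6 - Q 2 3 6)) by ring.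
  rewrite e6 e12 e18 e24 e30 e33 e34 !mulr0 ?oppr0 ?addr0 in h.
  by move/eqP: h; rewrite mulf_eq0 pnatr_eq0 orFb => /eqP.
have z21 : Q 1 3 6 = 0.
  have h : (2%:R : R) * Q 1 3 6 = - (1%:R * (- Q 1 3 6 - Q 1 4 5)) + 1%:R * (Q 1 3 6 + Q 2 3 5) + 1%:R * (- Q 1 4 5 - Q 2 3 5) by ring.
  rewrite e11 e23 e32 !mulr0 ?oppr0 ?addr0 in h.
  by move/eqP: h; rewrite mulf_eq0 pnatr_eq0 orFb => /eqP.
have z22 : Q 1 4 5 = 0.
  have h : (2%:R : R) * Q 1 4 5 = - (1%:R * (- Q 1 3 6 - Q 1 4 5)) + - (1%:R * (Q 1 3 6 + Q 2 3 5)) + - (1%:R * (- Q 1 4 5 - Q 2 3 5)) by ring.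
  rewrite e11 e23 e32 !mulr0 ?oppr0 ?addr0 in h.
  by move/eqP: h; rewrite mulf_eq0 pnatr_eq0 orFb => /eqP.
have z23 : Q 1 4 6 = 0.
  have h : (6%:R : R) * Q 1 4 6 = - (1%:R * (Q 0 1 2 - Q 0 3 4 - Q 0 5 6)) + - (2%:R * (- Q 0 1 2 + Q 1 3 5 - Q 1 4 6)) + 1%:R * (- Q 0 1 2 - Q 2 3 6 - Q 2 4 5) + - (1%:R * (- Q 0 3 4 - Q 1 3 5 + Q 2 3 6)) + 2%:R * (- Q 0 3 4 + Q 1 4 6 + Q 2 4 5) + 1%:R * (Q 0 5 6 + Q 1 3 5 - Q 2 4 5) + - (2%:R * (Q 0 5 6 - Q 1 4 6 - Q 2 3 6)) by ring.
  rewrite e6 e12 e18 e24 e30 e33 e34 !mulr0 ?oppr0 ?addr0 in h.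
  by move/eqP: h; rewrite mulf_eq0 pnatr_eq0 orFb => /eqP.
have z24 : Q 1 5 6 = 0.
  have h : (2%:R : R) * Q 1 5 6 = - (1%:R * (Q 0 3 5 - Q 0 4 6)) + - (2%:R * (- Q 1 3 4 - Q 1 5 6)) + - (1%:R * (- Q 0 3 5 + Q 1 3 4)) + - (1%:R * (Q 0 4 6 + Q 1 3 4)) by ring.
  rewrite e5 e13 e21 e29 !mulr0 ?oppr0 ?addr0 in h.
  by move/eqP: h; rewrite mulf_eq0 pnatr_eq0 orFb => /eqP.
have z25 : Q 2 3 4 = 0.
  have h : (2%:R : R) * Q 2 3 4 = 1%:R * (- Q 0 3 6 - Q 0 4 5) + 1%:R * (Q 0 3 6 + Q 2 3 4) + - (1%:R * (- Q 0 4 5 - Q 2 3 4)) by ring.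
  rewrite e4 e22 e28 !mulr0 ?oppr0 ?addr0 in h.
  by move/eqP: h; rewrite mulf_eq0 pnatr_eq0 orFb => /eqP.
have z26 : Q 2 3 5 = 0.
  have h : (2%:R : R) * Q 2 3 5 = 1%:R * (- Q 1 3 6 - Q 1 4 5) + 1%:R * (Q 1 3 6 + Q 2 3 5) + - (1%:R * (- Q 1 4 5 - Q 2 3 5)) by ring.
  rewrite e11 e23 e32 !mulr0 ?oppr0 ?addr0 in h.
  by move/eqP: h; rewrite mulf_eq0 pnatr_eq0 orFb => /eqP.
have z27 : Q 2 3 6 = 0.
  have h : (6%:R : R) * Q 2 3 6 = - (1%:R * (Q 0 1 2 - Q 0 3 4 - Q 0 5 6)) + 1%:R * (- Q 0 1 2 + Q 1 3 5 - Q 1 4 6) + - (2%:R * (- Q 0 1 2 - Q 2 3 6 - Q 2 4 5)) + 2%:R * (- Q 0 3 4 - Q 1 3 5 + Q 2 3 6) + - (1%:R * (- Q 0 3 4 + Q 1 4 6 + Q 2 4 5)) + 1%:R * (Q 0 5 6 + Q 1 3 5 - Q 2 4 5) + - (2%:R * (Q 0 5 6 - Q 1 4 6 - Q 2 3 6)) by ring.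
  rewrite e6 e12 e18 e24 e30 e33 e34 !mulr0 ?oppr0 ?addr0 in h.
  by move/eqP: h; rewrite mulf_eq0 pnatr_eq0 orFb => /eqP.
have z28 : Q 2 4 5 = 0.
  have h : (6%:R : R) * Q 2 4 5 = - (1%:R * (Q 0 1 2 - Q 0 3 4 - Q 0 5 6)) + 1%:R * (- Q 0 1 2 + Q 1 3 5 - Q 1 4 6) + - (2%:R * (- Q 0 1 2 - Q 2 3 6 - Q 2 4 5)) + - (1%:R * (- Q 0 3 4 - Q 1 3 5 + Q 2 3 6)) + 2%:R * (- Q 0 3 4 + Q 1 4 6 + Q 2 4 5) + - (2%:R * (Q 0 5 6 + Q 1 3 5 - Q 2 4 5)) + 1%:R * (Q 0 5 6 - Q 1 4 6 - Q 2 3 6) by ring.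
  rewrite e6 e12 e18 e24 e30 e33 e34 !mulr0 ?oppr0 ?addr0 in h.
  by move/eqP: h; rewrite mulf_eq0 pnatr_eq0 orFb => /eqP.
have z29 : Q 2 4 6 = 0.
  have h : (2%:R : R) * Q 2 4 6 = 1%:R * (- Q 1 3 6 - Q 1 4 5) + - (2%:R * (Q 2 3 5 - Q 2 4 6)) + 1%:R * (Q 1 3 6 + Q 2 3 5) + - (1%:R * (- Q 1 4 5 - Q 2 3 5)) by ring.
  rewrite e11 e19 e23 e32 !mulr0 ?oppr0 ?addr0 in h.
  by move/eqP: h; rewrite mulf_eq0 pnatr_eq0 orFb => /eqP.
have z30 : Q 2 5 6 = 0.
  have h : (2%:R : R) * Q 2 5 6 = - (1%:R * (- Q 0 3 6 - Q 0 4 5)) + - (2%:R * (- Q 2 3 4 - Q 2 5 6)) + - (1%:R * (Q 0 3 6 + Q 2 3 4)) + 1%:R * (- Q 0 4 5 - Q 2 3 4) by ring.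
  rewrite e4 e20 e22 e28 !mulr0 ?oppr0 ?addr0 in h.
  by move/eqP: h; rewrite mulf_eq0 pnatr_eq0 orFb => /eqP.
have z31 : Q 3 4 5 = 0.
  have h : (2%:R : R) * Q 3 4 5 = - (1%:R * (Q 0 1 3 - Q 0 2 4)) + - (1%:R * (Q 0 1 3 - Q 1 2 5)) + 1%:R * (- Q 0 2 4 - Q 1 2 5) + - (2%:R * (- Q 0 1 3 - Q 3 4 5)) by ring.
  rewrite e1 e9 e17 e25 !mulr0 ?oppr0 ?addr0 in h.
  by move/eqP: h; rewrite mulf_eq0 pnatr_eq0 orFb => /eqP.
have z32 : Q 3 4 6 = 0.
  have h : (2%:R : R) * Q 3 4 6 = - (1%:R * (- Q 0 1 4 - Q 0 2 3)) + 1%:R * (- Q 0 1 4 - Q 1 2 6) + 1%:R * (Q 0 2 3 + Q 1 2 6) + - (2%:R * (Q 0 2 3 - Q 3 4 6)) by ring.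
  rewrite e0 e10 e16 e26 !mulr0 ?oppr0 ?addr0 in h.
  by move/eqP: h; rewrite mulf_eq0 pnatr_eq0 orFb => /eqP.
have z33 : Q 3 5 6 = 0.
  have h : (2%:R : R) * Q 3 5 6 = - (1%:R * (Q 0 1 5 - Q 0 2 6)) + - (1%:R * (- Q 0 1 5 - Q 1 2 3)) + - (1%:R * (Q 0 2 6 - Q 1 2 3)) + - (2%:R * (Q 1 2 3 - Q 3 5 6)) by ring.
  rewrite e3 e7 e15 e27 !mulr0 ?oppr0 ?addr0 in h.
  by move/eqP: h; rewrite mulf_eq0 pnatr_eq0 orFb => /eqP.
have z34 : Q 4 5 6 = 0.
  have h : (2%:R : R) * Q 4 5 6 = - (1%:R * (- Q 0 1 6 - Q 0 2 5)) + - (1%:R * (Q 0 1 6 - Q 1 2 4)) + 1%:R * (- Q 0 2 5 + Q 1 2 4) + - (2%:R * (Q 1 2 4 - Q 4 5 6)) by ring.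
  rewrite e2 e8 e14 e31 !mulr0 ?oppr0 ?addr0 in h.
  by move/eqP: h; rewrite mulf_eq0 pnatr_eq0 orFb => /eqP.
by do ?split.
Qed.
Lemma alt_eq (R : realType) (Q : nat -> nat -> nat -> R)
  (Hs : forall i j k, Q i j k = - Q j i k) (Hc : forall i j k, Q i j k = Q j k i) i j k :
  Q i j k = alt Q i j k.
Proof.
have Q0 : forall i k, Q i i k = 0.
  by move=> a b; have := Hs a a b; lra.
rewrite /alt.
case: ifP => // h1.
case: ifP => [_|h2]; first by rewrite Hc.
case: ifP => [_|h3]; first by rewrite Hc Hc.
case: ifP => [_|h4]; first by rewrite Hs.
case: ifP => [_|h5]; first by rewrite Hc Hs [Q i k j]Hc.
case: ifP => [_|h6]; first by rewrite Hc Hs.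
have [->|ne1] := eqVneq i j; first by rewrite Q0.
have [->|ne2] := eqVneq j k; first by rewrite Hc Q0.
have [->|ne3] := eqVneq i k; first by rewrite Hc Hc Q0.
exfalso; move: h1 h2 h3 h4 h5 h6 ne1 ne2 ne3; lia.
Qed.

Lemma pure_all (R : realType) (Q : nat -> nat -> nat -> R)
  (Hs : forall i j k, Q i j k = - Q j i k) (Hc : forall i j k, Q i j k = Q j k i)
  (H : forall i j k l, (i < 7)%N -> (j < 7)%N -> (k < 7)%N -> (l < 7)%N -> DD Q i j k l = 0) :
  forall i j k, (i < 7)%N -> (j < 7)%N -> (k < 7)%N -> Q i j k = 0.
Proof.
have E := alt_eq Hs Hc.
have EQ : Q = alt Q.
  by apply: functional_extensionality => a; apply: functional_extensionality => b;
     apply: functional_extensionality => d; apply: E.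
have H' := H; rewrite EQ in H'.
have Z := pure_sorted H'.
have ZS : forall a b d, (a < b)%N -> (b < d)%N -> (d < 7)%N -> Q a b d = 0.
  move: Z => [z0 [z1 [z2 [z3 [z4 [z5 [z6 [z7 [z8 [z9 [z10 [z11 [z12 [z13 [z14 [z15 [z16 [z17 [z18 [z19 [z20 [z21 [z22 [z23 [z24 [z25 [z26 [z27 [z28 [z29 [z30 [z31 [z32 [z33 z34]]]]]]]]]]]]]]]]]]]]]]]]]]]]]]]]]].
  move=> a b d.
  do 7?[case: a => [|a]]; do 7?[case: b => [|b]]; do 7?[case: d => [|d]];
    move=> hab hbd hd; try (exfalso; lia); first [exact z0|exact z1|exact z2|exact z3|exact z4|exact z5|exact z6|exact z7|exact z8|exact z9|exact z10|exact z11|exact z12|exact z13|exact z14|exact z15|exact z16|exact z17|exact z18|exact z19|exact z20|exact z21|exact z22|exact z23|exact z24|exact z25|exact z26|exact z27|exact z28|exact z29|exact z30|exact z31|exact z32|exact z33|exact z34].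
move=> i j k hi hj hk; rewrite E /alt.
case: ifP => [/andP[h1 h2]|_]; first by apply: ZS => //; lia.
case: ifP => [/andP[h1 h2]|_]; first by apply: ZS => //; lia.
case: ifP => [/andP[h1 h2]|_]; first by apply: ZS => //; lia.
case: ifP => [/andP[h1 h2]|_]; first by rewrite ZS ?oppr0 //; lia.
case: ifP => [/andP[h1 h2]|_]; first by rewrite ZS ?oppr0 //; lia.
case: ifP => [/andP[h1 h2]|_]; first by rewrite ZS ?oppr0 //; lia.
by [].
Qed.

Lemma lin_sumR (R : realType) (V : vectType R) (h : V -> R)
  (Hh : forall (a : R) x y, h (a *: x + y) = a * h x + h y) n (a : 'I_n -> R) (v : 'I_n -> V) :
  h (\sum_i a i *: v i) = \sum_i a i * h (v i).
Proof.
have h0 : h 0 = 0 by have := Hh 1 0 0; rewrite scale1r addr0 mul1r; lra.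
elim/big_rec2: _ => [|i y1 y2 _ <-]; first by [].
by rewrite Hh.
Qed.

Lemma lin_sumV (R : realType) (V : vectType R) (h : V -> V)
  (Hh : forall (a : R) x y, h (a *: x + y) = a *: h x + h y) n (a : 'I_n -> R) (v : 'I_n -> V) :
  h (\sum_i a i *: v i) = \sum_i a i *: h (v i).
Proof.
have h0 : h 0 = 0.
  have := Hh 1 0 0; rewrite scale1r addr0 scale1r.
  by move/(congr1 (fun t => t - h 0)); rewrite subrr addrK => <-.
elim/big_rec2: _ => [|i y1 y2 _ <-]; first by [].
by rewrite Hh.
Qed.

Lemma sum7E (R : realType) (G : nat -> R) : \sum_(m < 7) G m = sum7 G.
Proof. by rewrite !big_ord_recr big_ord0 /= add0r. Qed.

Lemma gn2 (R : realType) (m : nat) : gn R m * gn R m = 1.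
Proof. by rewrite /gn; case: ifP => _; rewrite ?mulr1 ?mulrNN ?mulr1. Qed.

Theorem lemma3p9 (R : realType) (V : vectType R)
  (br : V -> V -> V) (sp : V -> V -> R) :
  \dim (fullv : {vspace V}) = 7%N ->
  is_lie_bracket br ->
  lie_nilpotent br ->
  lie_nonabelian br ->
  is_invariant_scalar_product br sp ->
  has_index_three sp ->
  ~ (exists phi : V -> V -> V -> R,
       trilinear phi /\ g22_compatible sp phi /\ ad_annihilates br phi).
Proof.
move=> _ [brL [brR [brA _]]] _ [x0 [y0 nz]] [spL [spS [spN spI]]] _
  [phi [[phL [phM phR]] [[f [c [fb [cnz [fphi fsp]]]]] ann]]].
have fphi' : forall i j k : nat, (i < 7)%N -> (j < 7)%N -> (k < 7)%N ->
    phi f`_i f`_j f`_k = phn R i j k.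
  move=> i j k hi hj hk.
  by have := fphi (Ordinal hi) (Ordinal hj) (Ordinal hk); rewrite !(tnth_nth 0).
have fspd : forall i : 'I_7, sp f`_i f`_i = c * gn R i.
  move=> i; have := fsp i i; rewrite !(tnth_nth 0) /g0 eqxx => ->.
  by rewrite /gn; case: ifP.
have fspo : forall i j : 'I_7, i != j -> sp f`_i f`_j = 0.
  move=> i j ne; have := fsp i j; rewrite !(tnth_nth 0) /g0 (negbTE ne) => ->.
  by rewrite mulr0.
have spR : forall (a : R) x y u, sp u (a *: x + y) = a * sp u x + sp u y.
  by move=> a x y u; rewrite spS spL (spS x) (spS y).
have expand : forall h : V -> R, (forall (a : R) x y, h (a *: x + y) = a * h x + h y) ->
    forall w, c * h w = \sum_(m < 7) gn R m * sp w f`_m * h f`_m.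
  move=> h hL w.
  have hw := coord_basis fb (memvf w).
  have spw : forall m : 'I_7, sp w f`_m = coord f m w * (c * gn R m).
    move=> m; rewrite {1}hw (lin_sumR (h := fun x => sp x f`_m)); last first.
      by move=> a x y; apply: spL.
    rewrite (bigD1 m) //= fspd big1 ?addr0 // => i ne.
    by rewrite fspo ?mulr0.
  rewrite {1}hw (lin_sumR hL) mulr_sumr; apply: eq_bigr => m _.
  rewrite spw.
  have := gn2 R m; move: (gn R m) => g hg.
  rewrite -[c * (_ * _)]mulr1 -hg. ring.
pose Q i j k := sp (br f`_i f`_j) f`_k.
have brD : forall x y z, br (x + y) z = br x z + br y z.
  by move=> x y z; have := brL 1 x y z; rewrite !scale1r.
have brD' : forall x y z, br z (x + y) = br z x + br z y.
  by move=> x y z; have := brR 1 x y z; rewrite !scale1r.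
have brN : forall x y, br x y = - br y x.
  move=> x y; have := brA (x + y); rewrite brD !brD' !brA add0r addr0 => /eqP.
  by rewrite addr_eq0 => /eqP.
have sp0 : forall z, sp 0 z = 0.
  by move=> z; have := spL 1 0 0 z; rewrite scale1r addr0 mul1r; lra.
have spN' : forall v z, sp (- v) z = - sp v z.
  by move=> v z; have := spL (-1) v 0 z; rewrite scaleN1r addr0 sp0 addr0 mulN1r.
have Hs : forall i j k, Q i j k = - Q j i k.
  by move=> i j k; rewrite /Q brN spN'.
have Hc : forall i j k, Q i j k = Q j k i.
  by move=> i j k; rewrite /Q spI spS.
have DQ : forall i j k l, (i < 7)%N -> (j < 7)%N -> (k < 7)%N -> (l < 7)%N -> DD Q i j k l = 0.
  move=> i j k l hi hj hk hl.
  have E1 : c * phi (br f`_i f`_j) f`_k f`_l = \sum_(m < 7) gn R m * Q i j m * phn R m k l.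
    rewrite (expand (fun w => phi w f`_k f`_l)); last by move=> a x y; apply: phL.
    by apply: eq_bigr => m _; rewrite fphi'.
  have E2 : c * phi f`_j (br f`_i f`_k) f`_l = \sum_(m < 7) gn R m * Q i k m * phn R j m l.
    rewrite (expand (fun w => phi f`_j w f`_l)); last by move=> a x y; apply: phM.
    by apply: eq_bigr => m _; rewrite fphi'.
  have E3 : c * phi f`_j f`_k (br f`_i f`_l) = \sum_(m < 7) gn R m * Q i l m * phn R j k m.
    rewrite (expand (fun w => phi f`_j f`_k w)); last by move=> a x y; apply: phR.
    by apply: eq_bigr => m _; rewrite fphi'.
  have := congr1 (fun t => c * t) (ann f`_i f`_j f`_k f`_l).
  rewrite /= !mulrDr E1 E2 E3 mulr0.
  rewrite (sum7E (fun m => gn R m * Q i j m * phn R m k l))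
          (sum7E (fun m => gn R m * Q i k m * phn R j m l))
          (sum7E (fun m => gn R m * Q i l m * phn R j k m)).
  move=> <-; rewrite /DD /sum7; ring.
have QZ := pure_all Hs Hc DQ.
have brf : forall i j : 'I_7, br f`_i f`_j = 0.
  move=> i j; apply: spN => y.
  rewrite (coord_basis fb (memvf y)) (lin_sumR (h := sp (br f`_i f`_j))); last first.
    by move=> a x z; apply: spR.
  by rewrite big1 // => m _; have := QZ i j m (ltn_ord i) (ltn_ord j) (ltn_ord m); rewrite /Q => ->; rewrite mulr0.
have brz : forall x y, br x y = 0.
  move=> x y.
  rewrite (coord_basis fb (memvf x)) (lin_sumV (h := fun u => br u y)); last first.
    by move=> a u z; apply: brL.
  rewrite big1 // => i _.
  rewrite (coord_basis fb (memvf y)) (lin_sumV (h := br f`_i)); last first.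
    by move=> a u z; apply: brR.
  by rewrite big1 ?scaler0 // => j _; rewrite brf scaler0.
by move: nz; rewrite brz eqxx.
Qed.
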